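(* For $n,m\ge0$, let $S_{n,m}$ be the signed graph obtained from disjoint copies of the star graphs $S_n$ and $S_m$ by joining their center vertices with a negative edge. Then $$X_{S_{n,m}}=\sum_{i=0}^{n}\sum_{j=0}^{m}\binom{n}{i}\binom{m}{j}(-1)^{i+j}p_{1,0}^{n+m-i-j}\bigl(p_{i+1,0}p_{j+1,0}-p_{i+1,j+1}\bigr).$$
   Context: $S_k$ ($k\ge0$) is the star signed graph with $k+1$ vertices: a center vertex joined by $k$ positive edges to $k$ other vertices. For a signed graph $\Sigma$ (finite graph with edge signs in $\{+,-\}$), a coloring $\kappa:V(\Sigma)\to\mathbb{Z}$ is proper if $\kappa(u)\ne\mathrm{sgn}(e)\kappa(v)$ for every edge $e$ with endpoints $u,v$, and $X_\Sigma=\sum_{\kappa\text{ proper}}\prod_{v}x_{\kappa(v)}$ in commuting variables $x_i$, $i\in\mathbb{Z}$. $p_{a,b}=\sum_{i\in\mathbb{Z}}x_i^ax_{-i}^b$. *)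

(* Defs.v *)
From HB Require Import structures.
From mathcomp Require Import all_boot all_order all_algebra.
From mathcomp Require Import mpoly.
Set Implicit Arguments. Unset Strict Implicit. Unset Printing Implicit Defensive.
Import GRing.Theory.
Local Open Scope ring_scope.

(* A signed graph: a finite vertex type and a finite list of edges
   (u, v, s), with s = true meaning a positive edge and s = false a negative
   edge. *)
Record signed_graph := SignedGraph {
  sg_V : finType;
  sg_E : seq (sg_V * sg_V * bool) }.

Definition sgn_mul (s : bool) (z : int) : int := if s then z else - z.

Definition proper (G : signed_graph) (kappa : sg_V G -> int) : bool :=
  all (fun e : sg_V G * sg_V G * bool =>
         let: (u, v, s) := e in kappa u != sgn_mul s (kappa v)) (sg_E G).

(* Truncation to the variables x_{-N}, ..., x_N: the variable x_i (|i| <= N)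
   is the mpoly variable 'X_k with k : 'I_(2N+1) and i = k - N. *)
Definition col (N : nat) (k : 'I_(N.*2.+1)) : int := (k : int) - (N : int).

(* X_Sigma with all variables x_i, |i| > N, set to 0: sum over proper colorings
   with colors in [-N, N]. *)
Definition chromX (N : nat) (G : signed_graph) : {mpoly int[N.*2.+1]} :=
  \sum_(kappa : {ffun sg_V G -> 'I_(N.*2.+1)} | proper (fun v => col (kappa v)))
     \prod_(v : sg_V G) 'X_(kappa v).

(* p_{a,b} = sum_i x_i^a x_{-i}^b, truncated in the same way
   (rev_ord k corresponds to the color -(k - N)). *)
Definition pab (N a b : nat) : {mpoly int[N.*2.+1]} :=
  \sum_(k : 'I_(N.*2.+1)) 'X_k ^+ a * 'X_(rev_ord k) ^+ b.

(* The signed graph S_{n,m}: vertices (option 'I_n) + (option 'I_m), where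
   inl None / inr None are the two centers. *)
Definition Snm_V (n m : nat) : finType := (option 'I_n + option 'I_m)%type.

Definition Snm (n m : nat) : signed_graph :=
  @SignedGraph (Snm_V n m)
    ((inl None, inr None, false)
     :: [seq (inl None, inl (Some i), true) | i : 'I_n]
     ++ [seq (inr None, inr (Some j), true) | j : 'I_m]).

(* Main.v *)
Require Import Defs.
From HB Require Import structures.
From mathcomp Require Import all_boot all_order all_algebra.
From mathcomp Require Import mpoly.
From mathcomp Require Import zify ring.
Import GRing.Theory.
Local Open Scope ring_scope.

Lemma col_inj N : injective (@Defs.col N).
Proof. move=> a b; rewrite /Defs.col => /addIr /eqP; rewrite eqz_nat => /eqP; exact: val_inj. Qed.

Lemma col_rev N (k : 'I_(N.*2.+1)) : Defs.col (rev_ord k) = - Defs.col k.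
Proof. rewrite /Defs.col /=. have := ltn_ord k. move: (nat_of_ord k) => x hx. lia. Qed.

Lemma big_opt (R : Type) (idx : R) (op : Monoid.com_law idx) (T : finType) (F : option T -> R) :
  \big[op/idx]_o F o = op (F None) (\big[op/idx]_i F (Some i)).
Proof.
rewrite (bigD1 None) //=; congr (op _ _).
rewrite (reindex_omap Some (fun o => o)) /=; last by move=> [i|].

by apply: eq_bigl => i; rewrite eqxx.
Qed.

Lemma proper_Snm n m N (k : {ffun Snm_V n m -> 'I_(N.*2.+1)}) :
  @Defs.proper (Snm n m) (fun v => Defs.col (k v)) =
  [&& k (inr None) != rev_ord (k (inl None)),
      [forall i, k (inl (Some i)) != k (inl None)] &
      [forall j, k (inr (Some j)) != k (inr None)]].
Proof.
rewrite /Defs.proper /= all_cat !all_map.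
congr (_ && (_ && _)).
- rewrite -col_rev (inj_eq (@col_inj N)).
  apply/idP/idP => /eqP H; apply/eqP => H'; apply: H; by rewrite H' rev_ordK.
- apply/allP/forallP => H i.
    have := H i (mem_index_enum i).
    by rewrite /preim /= (inj_eq (@col_inj N)) eq_sym.
  by move=> _; rewrite /preim /= (inj_eq (@col_inj N)) eq_sym; exact: H.
- apply/allP/forallP => H i.
    have := H i (mem_index_enum i).
    by rewrite /preim /= (inj_eq (@col_inj N)) eq_sym.
  by move=> _; rewrite /preim /= (inj_eq (@col_inj N)) eq_sym; exact: H.
Qed.

Lemma stepA n m N :
  let P := \sum_(k : 'I_(N.*2.+1)) ('X_k : {mpoly int[N.*2.+1]}) in
  chromX N (Snm n m) = \sum_ca \sum_(cb | cb != rev_ord ca)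
     ('X_ca * (P - 'X_ca) ^+ n) * ('X_cb * (P - 'X_cb) ^+ m).
Proof.
move=> P; rewrite /chromX.
rewrite (partition_big (fun k : {ffun Snm_V n m -> 'I_(N.*2.+1)} => (k (inl None), k (inr None)))
          (fun p => p.2 != rev_ord p.1)); last first.
  by move=> k; rewrite proper_Snm => /and3P [].
rewrite [RHS]pair_big_dep /=; apply: eq_bigr => [[ca cb]] /= Hcb.

pose Qf := fun (v : Snm_V n m) (x : 'I_(N.*2.+1)) => match v with
  | inl None => x == ca | inl (Some _) => x != ca
  | inr None => x == cb | inr (Some _) => x != cb end.
transitivity (\sum_(f in family Qf) \prod_v ('X_(f v) : {mpoly int[N.*2.+1]})).
  apply: eq_bigl => k; rewrite proper_Snm; apply/idP/familyP.
    case/andP => /and3P[_ /forallP H1 /forallP H2] /eqP[E1 E2] [[i|]|[j|]];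
      rewrite unfold_in /= ?E1 ?E2 //.
      by have := H1 i; rewrite E1.
    by have := H2 j; rewrite E2.
  move=> H; have := H (inl None); have := H (inr None).
  rewrite !unfold_in /= => /eqP E2 /eqP E1.
  move: Hcb; rewrite -E1 -E2 => Hcb; rewrite Hcb eqxx andbT /=; apply/andP; split; apply/forallP.
    by move=> i; have := H (inl (Some i)); rewrite unfold_in /= E1.
  by move=> j; have := H (inr (Some j)); rewrite unfold_in /= E2.
rewrite -(bigA_distr_big_dep Qf (fun _ k => 'X_k)) big_sumType !big_opt /=.
have HP c : \sum_(k | k != c) ('X_k : {mpoly int[N.*2.+1]}) = P - 'X_c.
  by rewrite /P [in RHS](bigD1 c) //= addrC addrK.
rewrite !big_pred1_eq !HP !prodr_const !card_ord.
done.
Qed.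

Lemma alg_id (R : comRingType) (P x y : R) (n m i j : nat) :
  (i <= n)%N -> (j <= m)%N ->
  x * ((-1) ^+ i * P ^+ (n - i) * x ^+ i *+ 'C(n, i)) *
  (y * ((-1) ^+ j * P ^+ (m - j) * y ^+ j *+ 'C(m, j))) =
  ('C(n, i) * 'C(m, j))%:R * (-1) ^+ (i + j) * P ^+ (n + m - i - j) *
  (x ^+ i.+1 * y ^+ j.+1).
Proof.
move=> hi hj.
have -> : (n + m - i - j = (n - i) + (m - j))%N by lia.
rewrite -(mulr_natl _ 'C(n, i)) -(mulr_natl _ 'C(m, j)) natrM !exprD !exprS.
ring.
Qed.

Lemma stepD N a b :
  pab N a 0 * pab N b 0 - pab N a b =
  \sum_ca \sum_(cb | cb != rev_ord ca) 'X_ca ^+ a * 'X_cb ^+ b.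
Proof.
rewrite /pab; under eq_bigr do rewrite expr0 mulr1.
under [X in _ * X]eq_bigr do rewrite expr0 mulr1.
rewrite big_distrl /=; under eq_bigr do rewrite big_distrr /=.
under eq_bigr => ca _ do rewrite (bigD1 (rev_ord ca)) //=.
by rewrite big_split /= [X in X - _]addrC addrK.
Qed.

Theorem lemma6p6 (n m N : nat) :
  chromX N (Snm n m) =
  \sum_(i < n.+1) \sum_(j < m.+1)
     ('C(n, i) * 'C(m, j))%:R * (-1) ^+ (i + j)
     * pab N 1 0 ^+ (n + m - i - j)
     * (pab N i.+1 0 * pab N j.+1 0 - pab N i.+1 j.+1).
Proof.
have HP : pab N 1 0 = \sum_(k : 'I_(N.*2.+1)) ('X_k : {mpoly int[N.*2.+1]}).
  by rewrite /pab; apply: eq_bigr => k _; rewrite expr1 expr0 mulr1.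
rewrite stepA /= -HP.
under [RHS]eq_bigr => i _ do under eq_bigr => j _ do rewrite stepD big_distrr /=.
under [RHS]eq_bigr => i _ do under eq_bigr => j _ do under eq_bigr => ca _ do rewrite big_distrr /=.
under [LHS]eq_bigr => ca _ do under eq_bigr => cb _ do rewrite !exprBn [X in X * _]big_distrr [X in _ * X]big_distrr big_distrlr /=.
under [LHS]eq_bigr => ca _ do rewrite exchange_big /=.
under [LHS]eq_bigr => ca _ do under eq_bigr => i _ do rewrite exchange_big /=.
rewrite [LHS]exchange_big /=; apply: eq_bigr => i _.
rewrite [LHS]exchange_big /=; apply: eq_bigr => j _.
apply: eq_bigr => ca _; apply: eq_bigr => cb _.
by apply: alg_id; rewrite -ltnS.
Qed.
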